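(* Let $\psi\in\mathcal K$ have radius of convergence $R_\psi>0$ and Khinchin family $(Y_t)$, and let $g(z)=\sum_{n\ge1}A_nz^n$ be the solution of Lagrange's equation $g(z)=z\psi(g(z))$. For $t\in(0,R_\psi)$ let $q(t)$ be the extinction probability of the Bienaymé–Galton–Watson process with offspring distribution $Y_t$. Then $$q(t)=\sum_{n=1}^\infty\frac{A_nt^{n-1}}{\psi(t)^n}=\frac{g(t/\psi(t))}{t}\qquad\text{for every }t\in(0,R_\psi).$$
   Context: $\mathcal K$ is the class of non-constant power series $f(z)=\sum_{n\ge0}a_nz^n$ with positive radius of convergence $R$, non-negative coefficients and $a_0>0$; its Khinchin family $(X_t)_{t\in[0,R)}$ is given by $\mathbf P(X_t=n)=a_nt^n/f(t)$ for $n\ge0$, $t\in(0,R)$. The solution $g$ of Lagrange's equation with data $\psi$ is the unique power series satisfying $g(z)=z\psi(g(z))$; its coefficients are non-negative, $A_0=0$. (When $t/\psi(t)$ equals the radius of convergence of $g$, $g(t/\psi(t))$ denotes the value of the convergent series there.) The extinction probability is the probability that the Galton–Watson tree is finite. *)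

(* Defs.v *)
From Stdlib Require Import Reals.
From Coquelicot Require Import Coquelicot.
Open Scope R_scope.

Definition in_K (a : nat -> R) : Prop :=
  (forall n, 0 <= a n) /\ 0 < a 0%nat /\ (exists n, (1 <= n)%nat /\ a n <> 0) /\
  Rbar_lt (Finite 0) (CV_radius a).

Definition khinchin (a : nat -> R) (t : R) : nat -> R :=
  fun n => a n * t ^ n / PSeries a t.

Definition fps_mul (u v : nat -> R) : nat -> R :=
  fun n => sum_f_R0 (fun i => u i * v (n - i)%nat) n.

Definition fps_one : nat -> R := fun n => if Nat.eqb n 0 then 1 else 0.

Fixpoint fps_pow (u : nat -> R) (k : nat) : nat -> R :=
  match k with
  | O => fps_one
  | S k' => fps_mul u (fps_pow u k')
  end.

(** Coefficients of the formal composition psi(g(z)), valid when g_0 = 0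
    (then [z^n] g^k = 0 for k > n). *)
Definition fps_comp (a G : nat -> R) : nat -> R :=
  fun n => sum_f_R0 (fun k => a k * fps_pow G k n) n.

(** [G] is the (formal) solution of Lagrange's equation g(z) = z psi(g(z)):
    G_0 = 0 and [z^(n+1)] g = [z^n] psi(g). *)
Definition lagrange_solution (psi G : nat -> R) : Prop :=
  G 0%nat = 0 /\ forall n, G (S n) = fps_comp psi G n.

(** Bienaymé–Galton–Watson process with offspring distribution p, Z_0 = 1.
    [conv_pow p j] is the law of a sum of j i.i.d. copies of the offspring
    variable (j-fold convolution power); [gw_dist p n k] = P(Z_n = k),
    defined through the Markov transition P(Z_{n+1}=k | Z_n=j) = p^{*j}(k). *)
Fixpoint conv_pow (p : nat -> R) (j : nat) : nat -> R :=
  match j with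
  | O => fun k => if Nat.eqb k 0 then 1 else 0
  | S j' => fun k => sum_f_R0 (fun i => p i * conv_pow p j' (k - i)%nat) k
  end.

Fixpoint gw_dist (p : nat -> R) (n : nat) : nat -> R :=
  match n with
  | O => fun k => if Nat.eqb k 1 then 1 else 0
  | S n' => fun k => Series (fun j => gw_dist p n' j * conv_pow p j k)
  end.

(** Extinction probability: the probability that the tree is finite, i.e.
    P(exists n, Z_n = 0) = lim_n P(Z_n = 0) (increasing events). *)
Definition extinction_prob (p : nat -> R) : Rbar :=
  Lim_seq (fun n => gw_dist p n 0%nat).

(* Main.v *)
Require Import Defs.
From Stdlib Require Import Reals Lra Lia.
From Coquelicot Require Import Coquelicot.
Open Scope R_scope.

Lemma ser_iff (u : nat -> R) (l : R) :
  is_series u l <-> is_lim_seq (fun N => sum_f_R0 u N) l.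
Proof.
  rewrite is_series_Reals, is_lim_seq_Reals. unfold infinite_sum, Un_cv, R_dist. tauto.
Qed.

Lemma psum_incr (u : nat -> R) : (forall n, 0 <= u n) ->
  forall N, sum_f_R0 u N <= sum_f_R0 u (S N).
Proof. intros H N; simpl; specialize (H (S N)); lra. Qed.

Lemma nn_partial_le (u : nat -> R) l : (forall n, 0 <= u n) -> is_series u l ->
  forall N, sum_f_R0 u N <= l.
Proof.
  intros H Hs N. apply ser_iff in Hs.
  apply (is_lim_seq_incr_compare _ _ Hs). now apply psum_incr.
Qed.

Lemma nn_bounded (u : nat -> R) M : (forall n, 0 <= u n) ->
  (forall N, sum_f_R0 u N <= M) -> exists l : R, is_series u l /\ l <= M.
Proof.
  intros H HM.
  destruct (ex_finite_lim_seq_incr (fun N => sum_f_R0 u N) M (psum_incr u H) HM) as [l Hl].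
  exists l; split. now apply ser_iff.
  assert (Hc := is_lim_seq_const M).
  assert (Hle := is_lim_seq_le _ _ _ _ HM Hl Hc). simpl in Hle. exact Hle.
Qed.

Lemma series_le_bound (u : nat -> R) M l : 
  (forall N, sum_f_R0 u N <= M) -> is_series u l -> l <= M.
Proof.
  intros HM Hs. apply ser_iff in Hs.
  assert (Hc := is_lim_seq_const M).
  assert (Hle := is_lim_seq_le _ _ _ _ HM Hs Hc). simpl in Hle. exact Hle.
Qed.

Lemma series_cmp (u v : nat -> R) lu lv : (forall n, u n <= v n) ->
  is_series u lu -> is_series v lv -> lu <= lv.
Proof.
  intros H Hu Hv. apply ser_iff in Hu. apply ser_iff in Hv.
  assert (Hle := is_lim_seq_le _ _ _ _ (fun N => sum_Rle u v N (fun n _ => H n)) Hu Hv).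
  exact Hle.
Qed.

Lemma series_finite (u : nat -> R) N : (forall k, (N < k)%nat -> u k = 0) ->
  is_series u (sum_f_R0 u N).
Proof.
  intros H. apply ser_iff. apply is_lim_seq_ext_loc with (fun _ => sum_f_R0 u N).
  2: apply is_lim_seq_const.
  exists N. intros n Hn. induction Hn. reflexivity.
  simpl. rewrite H by lia. rewrite IHHn. ring.
Qed.

Lemma series_ge0 (u : nat -> R) l : (forall n, 0 <= u n) -> is_series u l -> 0 <= l.
Proof.
  intros H Hs. apply (Rle_trans _ (sum_f_R0 u 0)). simpl; apply H.
  now apply nn_partial_le.
Qed.

Lemma series_sum_fin (a : nat -> nat -> R) (c : nat -> R) :
  (forall k, is_series (fun j => a j k) (c k)) ->
  forall K, is_series (fun j => sum_f_R0 (fun k => a j k) K) (sum_f_R0 c K).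
Proof.
  intros H K. induction K. simpl. apply H.
  simpl. apply (is_series_plus _ _ _ _ IHK (H (S K))).
Qed.

Lemma tonelli (a : nat -> nat -> R) (r : nat -> R) (S : R) :
  (forall j k, 0 <= a j k) -> (forall j, is_series (a j) (r j)) -> is_series r S ->
  (forall k, ex_series (fun j => a j k)) /\
  is_series (fun k => Series (fun j => a j k)) S.
Proof.
  intros Hp Hr HS.
  assert (Hcol : forall k, ex_series (fun j => a j k)).
  { intros k.
    assert (Hjk : forall j, a j k <= r j).
    { intros j. apply (Rle_trans _ (sum_f_R0 (a j) k)).
      - destruct k. simpl; lra. simpl.
        assert (0 <= sum_f_R0 (a j) k). { apply cond_pos_sum. intro; apply Hp. } lra.
      - now apply nn_partial_le. }
    assert (Hr0 : forall j, 0 <= r j) by (intro j; apply (Rle_trans _ _ _ (Hp j k) (Hjk j))).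
    destruct (nn_bounded (fun j => a j k) S (fun j => Hp j k)) as [l [Hl _]].
    { intros N. apply (Rle_trans _ (sum_f_R0 r N)). apply sum_Rle; intros; apply Hjk.
      now apply nn_partial_le. }
    now exists l. }
  split; [exact Hcol|].
  set (c := fun k => Series (fun j => a j k)).
  assert (Hc : forall k, is_series (fun j => a j k) (c k)) by (intro; now apply Series_correct).
  assert (Hc0 : forall k, 0 <= c k) by (intro k; apply (series_ge0 _ _ (fun j => Hp j k) (Hc k))).
  assert (Hup : forall K, sum_f_R0 c K <= S).
  { intros K. refine (series_cmp _ _ _ _ _ (series_sum_fin a c Hc K) HS).
    intros j. apply (nn_partial_le _ _ (Hp j) (Hr j)). }
  destruct (nn_bounded c S Hc0 Hup) as [C [HC HCS]].
  assert (HSC : S <= C).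
  { apply (series_le_bound r C S); [|exact HS]. intros J.
    assert (Hr' := series_sum_fin (fun k j => a j k) r Hr J).
    refine (series_cmp _ _ _ _ _ Hr' HC).
    intros k. apply (nn_partial_le (fun j => a j k)); [intro; apply Hp| apply Hc]. }
  replace S with C by lra. exact HC.
Qed.

Lemma ser_ext (a b : nat -> R) (l : R) :
  (forall n, a n = b n) -> is_series a l -> is_series b l.
Proof. apply is_series_ext. Qed.

Lemma sum_nonneg (f : nat -> R) N : (forall i, (i <= N)%nat -> 0 <= f i) ->
  0 <= sum_f_R0 f N.
Proof.
  induction N; intros H; simpl. apply H; lia.
  assert (0 <= sum_f_R0 f N) by (apply IHN; intros; apply H; lia).
  assert (0 <= f (S N)) by (apply H; lia). lra.
Qed.

Lemma pow_zero (G : nat -> R) : G 0%nat = 0 ->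
  forall k n, (n < k)%nat -> fps_pow G k n = 0.
Proof.
  intros H0 k. induction k; intros n Hn. lia.
  simpl. unfold fps_mul. apply sum_eq_R0. intros i Hi.
  destruct i. rewrite H0; ring.
  rewrite IHk by lia. ring.
Qed.

Lemma pow_nonneg (u : nat -> R) n : (forall i, (i <= n)%nat -> 0 <= u i) ->
  forall k m, (m <= n)%nat -> 0 <= fps_pow u k m.
Proof.
  intros H k. induction k; intros m Hm.
  - simpl. unfold fps_one. destruct (Nat.eqb m 0); lra.
  - simpl. unfold fps_mul. apply sum_nonneg. intros i Hi.
    apply Rmult_le_pos. apply H; lia. apply IHk; lia.
Qed.

Lemma comp_nonneg (a u : nat -> R) n : (forall i, 0 <= a i) ->
  (forall i, (i <= n)%nat -> 0 <= u i) -> 0 <= fps_comp a u n.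
Proof.
  intros Ha Hu. unfold fps_comp. apply sum_nonneg. intros i Hi.
  apply Rmult_le_pos. apply Ha. apply (pow_nonneg u n Hu); lia.
Qed.

Lemma pow_local (u v : nat -> R) N : (forall i, (i <= N)%nat -> u i = v i) ->
  forall k n, (n <= N)%nat -> fps_pow u k n = fps_pow v k n.
Proof.
  intros H k. induction k; intros n Hn. reflexivity.
  simpl. unfold fps_mul. apply sum_eq. intros i Hi.
  rewrite H by lia. rewrite IHk by lia. reflexivity.
Qed.

Lemma comp_local (a u v : nat -> R) N : (forall i, (i <= N)%nat -> u i = v i) ->
  forall n, (n <= N)%nat -> fps_comp a u n = fps_comp a v n.
Proof.
  intros H n Hn. unfold fps_comp. apply sum_eq. intros i Hi.
  rewrite (pow_local u v N H i n Hn). reflexivity.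
Qed.

Lemma pow_series (G : nat -> R) z g : (forall n, 0 <= G n) -> 0 <= z ->
  is_series (fun n => G n * z ^ n) g ->
  forall k, is_series (fun n => fps_pow G k n * z ^ n) (g ^ k).
Proof.
  intros HG Hz Hg k. induction k.
  - simpl. replace 1 with (sum_f_R0 (fun n => fps_one n * z ^ n) 0).
    apply series_finite. intros k Hk. unfold fps_one.
    destruct k. lia. simpl. ring.
    unfold fps_one; simpl. ring.
  - assert (Hm := is_series_mult _ _ _ _ Hg IHk).
    assert (Hnn : forall n, 0 <= fps_pow G k n * z ^ n).
    { intros n. apply Rmult_le_pos. apply (pow_nonneg G n); auto.
      apply pow_le; auto. }
    specialize (Hm (ex_intro _ g (is_series_ext _ _ _ (fun n => eq_sym (Rabs_pos_eq _ (Rmult_le_pos _ _ (HG n) (pow_le _ n Hz))))  Hg))).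
    specialize (Hm (ex_intro _ (g ^ k) (is_series_ext _ _ _ (fun n => eq_sym (Rabs_pos_eq _ (Hnn n))) IHk))).
    replace (g ^ S k) with (g * g ^ k) by (simpl; ring).
    refine (is_series_ext _ _ _ _ Hm). intros n. simpl. unfold fps_mul.
    rewrite <- (Rmult_comm (z ^ n)), scal_sum. apply sum_eq. intros i Hi.
    replace (z ^ n) with (z ^ i * z ^ (n - i)) by (rewrite <- pow_add; f_equal; lia). ring.
Qed.

Lemma comp_series (a G : nat -> R) z g S : (forall n, 0 <= a n) -> (forall n, 0 <= G n) ->
  G 0%nat = 0 -> 0 <= z ->
  is_series (fun n => G n * z ^ n) g -> is_series (fun k => a k * g ^ k) S ->
  is_series (fun n => fps_comp a G n * z ^ n) S.
Proof.
  intros Ha HG H0 Hz Hg HS.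
  destruct (tonelli (fun k n => a k * (fps_pow G k n * z ^ n)) (fun k => a k * g ^ k) S)
    as [_ H].
  - intros j k. apply Rmult_le_pos. apply Ha. apply Rmult_le_pos.
    apply (pow_nonneg G k); auto. apply pow_le; auto.
  - intros j. replace (a j * g ^ j) with (g ^ j * a j) by ring.
    refine (is_series_ext (fun n => (fps_pow G j n * z ^ n) * a j) _ _ _ _).
    intro n; apply Rmult_comm. apply is_series_scal_r. now apply pow_series.
  - exact HS.
  - refine (is_series_ext _ _ _ _ H). intros n. simpl.
    rewrite (is_series_unique _ (sum_f_R0 (fun j => a j * (fps_pow G j n * z ^ n)) n)).
    + unfold fps_comp. rewrite <- (Rmult_comm (z ^ n)), scal_sum. apply sum_eq.
      intros; ring.
    + apply series_finite. intros k Hk. rewrite (pow_zero G H0 k n Hk). ring.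
Qed.

Lemma ps_series (psi : nat -> R) t y : Rbar_lt (Finite t) (CV_radius psi) ->
  0 <= y <= t -> is_series (fun k => psi k * y ^ k) (PSeries psi y).
Proof.
  intros Hr Hy. unfold PSeries. apply Series_correct.
  assert (H : ex_pseries psi y).
  { apply CV_radius_inside. apply Rbar_le_lt_trans with (Finite t); auto.
    simpl. rewrite Rabs_pos_eq; lra. }
  destruct H as [l Hl]. exists l. refine (ser_ext _ _ _ _ Hl).
  intros n. rewrite <- pow_n_pow. apply Rmult_comm.
Qed.

Lemma ps_mono (psi : nat -> R) t y1 y2 : (forall n, 0 <= psi n) ->
  Rbar_lt (Finite t) (CV_radius psi) ->
  0 <= y1 -> y1 <= y2 -> y2 <= t -> PSeries psi y1 <= PSeries psi y2.
Proof.
  intros Hn Hr H1 H12 H2.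
  refine (series_cmp _ _ _ _ _ (ps_series psi t y1 Hr _) (ps_series psi t y2 Hr _)).
  intros n. apply Rmult_le_compat_l. apply Hn. apply pow_incr. lra. lra. lra.
Qed.

Lemma ps_nonneg (psi : nat -> R) t y : (forall n, 0 <= psi n) ->
  Rbar_lt (Finite t) (CV_radius psi) -> 0 <= y <= t -> 0 <= PSeries psi y.
Proof.
  intros Hn Hr Hy. refine (series_ge0 _ _ _ (ps_series psi t y Hr Hy)).
  intros n. apply Rmult_le_pos. apply Hn. apply pow_le; lra.
Qed.

Lemma ps_pos (psi : nat -> R) t : (forall n, 0 <= psi n) -> 0 < psi 0%nat -> 0 <= t ->
  Rbar_lt (Finite t) (CV_radius psi) -> 0 < PSeries psi t.
Proof.
  intros Hn H0 Ht Hr.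
  assert (H := nn_partial_le _ _ (fun n => Rmult_le_pos _ _ (Hn n) (pow_le t n Ht)) (ps_series psi t t Hr (conj Ht (Rle_refl t))) 0).
  simpl in H. lra.
Qed.

Definition Pgf (psi : nat -> R) t (s : R) : R := PSeries psi (t * s) / PSeries psi t.

Fixpoint Fit (psi : nat -> R) t (n : nat) (s : R) : R :=
  match n with O => s | S n' => Fit psi t n' (Pgf psi t s) end.

Lemma Fit_comm psi t n s : Fit psi t n (Pgf psi t s) = Pgf psi t (Fit psi t n s).
Proof.
  revert s. induction n; intros s. reflexivity. simpl. apply IHn.
Qed.

Lemma Pgf_range psi t s : (forall n, 0 <= psi n) -> 0 < psi 0%nat -> 0 < t ->
  Rbar_lt (Finite t) (CV_radius psi) -> 0 <= s <= 1 -> 0 <= Pgf psi t s <= 1.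
Proof.
  intros Hn H0 Ht Hr Hs. assert (HP := ps_pos psi t Hn H0 (Rlt_le _ _ Ht) Hr).
  unfold Pgf. split.
  - apply Rmult_le_pos. apply (ps_nonneg psi t); auto. split; nra.
    left; apply Rinv_0_lt_compat; auto.
  - apply Rmult_le_reg_r with (PSeries psi t); auto.
    unfold Rdiv. rewrite Rmult_assoc, Rinv_l, Rmult_1_l, Rmult_1_r by lra.
    apply (ps_mono psi t); auto; nra.
Qed.

Lemma Pgf_mono psi t s1 s2 : (forall n, 0 <= psi n) -> 0 < psi 0%nat -> 0 < t ->
  Rbar_lt (Finite t) (CV_radius psi) -> 0 <= s1 -> s1 <= s2 -> s2 <= 1 ->
  Pgf psi t s1 <= Pgf psi t s2.
Proof.
  intros Hn H0 Ht Hr H1 H12 H2. assert (HP := ps_pos psi t Hn H0 (Rlt_le _ _ Ht) Hr).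
  unfold Pgf, Rdiv. apply Rmult_le_compat_r. left; apply Rinv_0_lt_compat; auto.
  apply (ps_mono psi t); auto; nra.
Qed.

Lemma Fit_range psi t n s : (forall n, 0 <= psi n) -> 0 < psi 0%nat -> 0 < t ->
  Rbar_lt (Finite t) (CV_radius psi) -> 0 <= s <= 1 -> 0 <= Fit psi t n s <= 1.
Proof.
  intros Hn H0 Ht Hr. revert s. induction n; intros s Hs. simpl; auto.
  simpl. apply IHn. apply Pgf_range; auto.
Qed.

Lemma khin_nonneg psi t : (forall n, 0 <= psi n) -> 0 < psi 0%nat -> 0 < t ->
  Rbar_lt (Finite t) (CV_radius psi) -> forall k, 0 <= khinchin psi t k.
Proof.
  intros Hn H0 Ht Hr k. assert (HP := ps_pos psi t Hn H0 (Rlt_le _ _ Ht) Hr).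
  unfold khinchin. apply Rmult_le_pos. apply Rmult_le_pos. apply Hn. apply pow_le; lra.
  left; apply Rinv_0_lt_compat; auto.
Qed.

Lemma khin_series psi t s : (forall n, 0 <= psi n) -> 0 < psi 0%nat -> 0 < t ->
  Rbar_lt (Finite t) (CV_radius psi) -> 0 <= s <= 1 ->
  is_series (fun k => khinchin psi t k * s ^ k) (Pgf psi t s).
Proof.
  intros Hn H0 Ht Hr Hs. unfold Pgf, khinchin.
  refine (ser_ext (fun k => psi k * (t * s) ^ k * / PSeries psi t) _ _ _ _).
  intros k. rewrite Rpow_mult_distr. unfold Rdiv. ring.
  apply is_series_scal_r. apply (ps_series psi t); auto; split; nra.
Qed.

Lemma conv_fps p j : forall k, conv_pow p j k = fps_pow p j k.
Proof.
  induction j; intros k. reflexivity.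
  simpl. unfold fps_mul. apply sum_eq. intros i _. rewrite IHj. reflexivity.
Qed.

Lemma gw_main psi t : (forall n, 0 <= psi n) -> 0 < psi 0%nat -> 0 < t ->
  Rbar_lt (Finite t) (CV_radius psi) -> forall n,
  (forall k, 0 <= gw_dist (khinchin psi t) n k) /\
  (forall s, 0 <= s <= 1 ->
     is_series (fun k => gw_dist (khinchin psi t) n k * s ^ k) (Fit psi t n s)).
Proof.
  intros Hn H0 Ht Hr. set (p := khinchin psi t).
  assert (Hp : forall k, 0 <= p k) by (apply khin_nonneg; auto).
  assert (Hc0 : forall j k, 0 <= conv_pow p j k).
  { intros j k. rewrite conv_fps. apply (pow_nonneg p k); auto. }
  assert (Hcs : forall j s, 0 <= s <= 1 ->
     is_series (fun k => conv_pow p j k * s ^ k) (Pgf psi t s ^ j)).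
  { intros j s Hs. refine (ser_ext (fun k => fps_pow p j k * s ^ k) _ _ _ _).
    intros k. rewrite (conv_fps p j k). reflexivity.
    apply pow_series. exact Hp. lra. apply khin_series; auto. }
  induction n.
  - split.
    + intros k. simpl. destruct (Nat.eqb k 1); lra.
    + intros s Hs. assert (Hf := series_finite (fun k => gw_dist p 0 k * s ^ k) 1%nat).
      replace (sum_f_R0 (fun k => gw_dist p 0 k * s ^ k) 1) with s in Hf.
      apply Hf. intros k Hk. simpl. destruct k. lia. destruct k. lia.
      simpl. ring. simpl. ring.
  - destruct IHn as [IH1 IH2].
    assert (Htn : forall s, 0 <= s <= 1 ->
      (forall k, ex_series (fun j => gw_dist p n j * conv_pow p j k * s ^ k)) /\
      is_series (fun k => Series (fun j => gw_dist p n j * conv_pow p j k * s ^ k))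
        (Fit psi t n (Pgf psi t s))).
    { intros s Hs.
      apply (tonelli (fun j k => gw_dist p n j * conv_pow p j k * s ^ k)
                      (fun j => gw_dist p n j * Pgf psi t s ^ j)).
      - intros j k. apply Rmult_le_pos. apply Rmult_le_pos; auto. apply pow_le; lra.
      - intros j. refine (ser_ext (fun k => (conv_pow p j k * s ^ k) * gw_dist p n j) _ _ _ _).
        intros k. simpl. ring.
        replace (gw_dist p n j * Pgf psi t s ^ j) with (Pgf psi t s ^ j * gw_dist p n j) by ring.
        apply is_series_scal_r. apply Hcs; auto.
      - apply IH2. apply Pgf_range; auto. }
    split.
    + intros k. simpl.
      destruct (Htn 1 ltac:(lra)) as [Hex _].
      assert (Hex' : ex_series (fun j => gw_dist p n j * conv_pow p j k)).
      { destruct (Hex k) as [l Hl]. exists l. refine (ser_ext _ _ _ _ Hl).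
        intros j. rewrite pow1. ring. }
      refine (series_ge0 _ _ _ (Series_correct _ Hex')).
      intros j. apply Rmult_le_pos; auto.
    + intros s Hs. destruct (Htn s Hs) as [_ Hser].
      simpl. refine (ser_ext _ _ _ _ Hser). intros k.
      rewrite Series_scal_r. reflexivity.
Qed.

Lemma A_nonneg psi A : lagrange_solution psi A -> (forall n, 0 <= psi n) ->
  forall n, 0 <= A n.
Proof.
  intros [HA0 HAS] Hn.
  assert (H : forall n i, (i <= n)%nat -> 0 <= A i).
  { induction n; intros i Hi.
    - replace i with 0%nat by lia. rewrite HA0; lra.
    - destruct (Compare_dec.le_lt_dec i n). apply IHn; auto.
      replace i with (S n) by lia. rewrite HAS. apply comp_nonneg; auto. }
  intros n. apply (H n n). lia.
Qed.

Lemma t_Pgf psi t s : 0 < PSeries psi t ->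
  t * Pgf psi t s = t / PSeries psi t * PSeries psi (t * s).
Proof. intros H. unfold Pgf. field. lra. Qed.

Lemma upper psi A t : in_K psi -> lagrange_solution psi A -> 0 < t ->
  Rbar_lt (Finite t) (CV_radius psi) ->
  forall N, sum_f_R0 (fun n => A n * (t / PSeries psi t) ^ n) N <= t * Fit psi t N 0.
Proof.
  intros [Hn [H0 _]] HL Ht Hr. assert (HAn := A_nonneg psi A HL Hn).
  destruct HL as [HA0 HAS].
  assert (HP := ps_pos psi t Hn H0 (Rlt_le _ _ Ht) Hr).
  set (z := t / PSeries psi t).
  assert (Hz : 0 <= z) by (unfold z; apply Rlt_le, Rdiv_lt_0_compat; auto).
  induction N.
  - simpl. rewrite HA0. lra.
  - rewrite decomp_sum by lia. simpl Init.Nat.pred. rewrite HA0, Rmult_0_l, Rplus_0_l.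
    set (SN := sum_f_R0 (fun n => A n * z ^ n) N) in *.
    assert (Hx := Fit_range psi t N 0 Hn H0 Ht Hr ltac:(lra)).
    set (xN := Fit psi t N 0) in *.
    assert (HSN0 : 0 <= SN).
    { apply sum_nonneg. intros. apply Rmult_le_pos; auto. apply pow_le; auto. }
    set (B := fun n => if Nat.leb n N then A n else 0).
    assert (HB : is_series (fun n => B n * z ^ n) SN).
    { assert (Hf := series_finite (fun n => B n * z ^ n) N).
      replace (sum_f_R0 (fun n => B n * z ^ n) N) with SN in Hf.
      apply Hf. intros k Hk. unfold B. destruct (Nat.leb_spec k N). lia. ring.
      apply sum_eq. intros i Hi. unfold B. destruct (Nat.leb_spec i N). reflexivity. lia. }
    assert (Hcs := comp_series psi B z SN (PSeries psi SN) Hn).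
    specialize (Hcs ltac:(intros n; unfold B; destruct (Nat.leb n N); auto; lra)).
    specialize (Hcs ltac:(unfold B; simpl; auto) Hz HB).
    specialize (Hcs (ps_series psi t SN Hr ltac:(split; nra))).
    assert (Hnn : forall n, 0 <= fps_comp psi B n * z ^ n).
    { intros n. apply Rmult_le_pos. apply comp_nonneg; auto.
      intros i _. unfold B. destruct (Nat.leb i N); auto; lra. apply pow_le; auto. }
    assert (Hle := nn_partial_le _ _ Hnn Hcs N).
    assert (Heq : sum_f_R0 (fun i => A (S i) * z ^ S i) N =
                  z * sum_f_R0 (fun n => fps_comp psi B n * z ^ n) N).
    { rewrite scal_sum. apply sum_eq. intros i Hi.
      rewrite HAS. rewrite (comp_local psi A B N); [simpl; ring | | lia].
      intros j Hj. unfold B. destruct (Nat.leb_spec j N). reflexivity. lia. }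
    rewrite Heq. simpl Fit. rewrite Fit_comm. rewrite t_Pgf by auto. fold z. fold xN.
    apply Rmult_le_compat_l; auto.
    apply Rle_trans with (PSeries psi SN).
    + apply Hle.
    + apply (ps_mono psi t); auto; nra.
Qed.

Theorem theorem6p4 (psi A : nat -> R) :
  in_K psi ->
  lagrange_solution psi A ->
  forall t : R, 0 < t -> Rbar_lt (Finite t) (CV_radius psi) ->
  exists q : R,
    extinction_prob (khinchin psi t) = Finite q /\
    is_series (fun n => A n * t ^ (n - 1) / (PSeries psi t) ^ n) q /\
    is_series (fun n => A n * (t / PSeries psi t) ^ n) (t * q).
Proof.
  intros HK HL t Ht Hr.
  assert (Hup := upper psi A t HK HL Ht Hr).
  destruct HK as [Hn [H0 _]].
  assert (HAn := A_nonneg psi A HL Hn).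
  destruct HL as [HA0 HAS].
  assert (HP := ps_pos psi t Hn H0 (Rlt_le _ _ Ht) Hr).
  set (z := t / PSeries psi t) in *.
  assert (Hz : 0 <= z) by (unfold z; apply Rlt_le, Rdiv_lt_0_compat; auto).
  assert (Hx : forall n, 0 <= Fit psi t n 0 <= 1) by (intro n; apply Fit_range; auto; lra).
  assert (Hnn : forall n, 0 <= A n * z ^ n) by (intro n; apply Rmult_le_pos; auto; apply pow_le; auto).
  destruct (nn_bounded (fun n => A n * z ^ n) t Hnn) as [Gz [HG HGt]].
  { intros N. apply Rle_trans with (1 := Hup N). specialize (Hx N). nra. }
  assert (HG0 : 0 <= Gz) by exact (series_ge0 _ _ Hnn HG).
  assert (Hfix : Gz = z * PSeries psi Gz).
  { assert (Hcs := comp_series psi A z Gz (PSeries psi Gz) Hn HAn HA0 Hz HG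
                     (ps_series psi t Gz Hr ltac:(lra))).
    assert (Hsh : is_series (fun k => A (S k) * z ^ S k) Gz).
    { apply (is_series_incr_1 (fun n => A n * z ^ n)).
      change (plus Gz (A 0%nat * z ^ 0)) with (Gz + A 0%nat * z ^ 0).
      rewrite HA0, Rmult_0_l, Rplus_0_r. exact HG. }
    assert (Hsh2 : is_series (fun k => A (S k) * z ^ S k) (PSeries psi Gz * z)).
    { refine (ser_ext _ _ _ _ (is_series_scal_r z _ _ Hcs)).
      intros k. rewrite HAS. simpl. ring. }
    assert (E1 := is_series_unique _ _ Hsh). assert (E2 := is_series_unique _ _ Hsh2).
    rewrite E1 in E2. rewrite Rmult_comm. exact E2. }
  assert (Hlow : forall m, t * Fit psi t m 0 <= Gz).
  { induction m.
    - simpl. lra.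
    - simpl Fit. rewrite Fit_comm, t_Pgf by auto. fold z. rewrite Hfix.
      apply Rmult_le_compat_l; auto. apply (ps_mono psi t); auto; specialize (Hx m); nra. }
  assert (Hlim : is_lim_seq (fun n => Fit psi t n 0) (Gz / t)).
  { apply is_lim_seq_le_le with (fun N => sum_f_R0 (fun n => A n * z ^ n) N * / t)
      (fun _ => Gz / t).
    - intros N. split.
      + apply Rmult_le_reg_r with t; auto. unfold Rdiv.
        rewrite Rmult_assoc, Rinv_l, Rmult_1_r by lra. rewrite Rmult_comm. apply Hup.
      + apply Rmult_le_reg_r with t; auto. unfold Rdiv.
        rewrite Rmult_assoc, Rinv_l, Rmult_1_r by lra. rewrite Rmult_comm. apply Hlow.
    - apply ser_iff in HG. apply (is_lim_seq_scal_r _ (/ t)) in HG. exact HG.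
    - apply is_lim_seq_const. }
  exists (Gz / t). split; [|split].
  - unfold extinction_prob.
    rewrite (Lim_seq_ext _ (fun n => Fit psi t n 0)).
    now apply is_lim_seq_unique.
    intros n. destruct (gw_main psi t Hn H0 Ht Hr n) as [_ Hs].
    specialize (Hs 0 ltac:(lra)).
    assert (Hf := series_finite (fun k => gw_dist (khinchin psi t) n k * 0 ^ k) 0).
    specialize (Hf ltac:(intros k Hk; destruct k; [lia | simpl; ring])).
    rewrite <- (is_series_unique _ _ Hs).
    rewrite (is_series_unique _ _ Hf). simpl. ring.
  - refine (ser_ext _ _ _ _ (is_series_scal_r (/ t) _ _ HG)).
    intros n. destruct n. rewrite HA0. simpl. unfold Rdiv. ring.
    replace (S n - 1)%nat with n by lia. unfold z, Rdiv.
    rewrite Rpow_mult_distr, pow_inv. simpl. field. split. apply pow_nonzero; lra. lra.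
  - replace (t * (Gz / t)) with Gz by (field; lra). exact HG.
Qed.
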